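(* Consider the pay-to-bid game with re-entry and its unique symmetric subgame perfect equilibrium, and let the seller's expected revenue be the sale price $s$ plus the expected total bid fees collected. Then: (I) If players are risk neutral ($u(x)=x$), the seller's expected revenue equals $v$. If players are risk-loving ($\rho<0$): (II) the seller's expected revenue equals $\frac{c\,u(v-s)}{u(c)}+s$; (III) it is independent of the number of players $n$; (IV) it is strictly greater than $v$; (V) it is strictly increasing in $v$, decreasing in $s$, decreasing in $c$, and decreasing in $\rho$ (i.e. larger when players are more risk-loving); (VI) its supremum over sale prices $s\ge 0$ and bid fees $0<c<v-s$ (for fixed $v$ and $\rho$) equals $u(v)=\frac{1-e^{-\rho v}}{\rho}$.
   Context: Pay-to-bid game: an object has monetary value $v>0$ that is common knowledge; there are $n\ge 2$ players; the bid fee is $c>0$ and the fixed sale price is $s\ge 0$, with $c<v-s$. Play proceeds in rounds $t=1,2,3,\dots$ with complete information. In each round every player simultaneously chooses an action in $\{\text{Bid},\text{No Bid}\}$. Each Bid costs $c$, paid immediately to the seller. If exactly one player bids in a round, she wins the object (value $v$), pays $s$ to the seller, and the game ends; if two or more bid, play continues; if none bids, the round is replayed. With re-entry, all $n$ players are active in every round regardless of history. Players do not discount; payoff is $u$(final wealth) with $u(x)=\frac{1-e^{-\rho x}}{\rho}$ for a constant $\rho<0$ (constant absolute risk-loving utility), or $u(x)=x$ in the risk-neutral case. In the unique symmetric subgame perfect equilibrium each player plays Bid in every round with probability $1-\left(u(c)/u(v-s)\right)^{1/(n-1)}$. *)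

(* Defs.v *)
From Stdlib Require Import Reals ClassicalEpsilon.
Open Scope R_scope.

Definition cara (rho x : R) : R := (1 - exp (- rho * x)) / rho.

Definition u_neutral (x : R) : R := x.

(* Equilibrium per-round bid probability of each player:
   1 - (u(c)/u(v-s))^(1/(n-1)). *)
Definition bid_prob (u : R -> R) (n : nat) (v s c : R) : R :=
  1 - Rpower (u c / u (v - s)) (/ INR (n - 1)).

(* Probability that exactly one of the n players bids in a round,
   when each bids independently with probability p (the game then ends). *)
Definition end_prob (n : nat) (p : R) : R := INR n * p * (1 - p) ^ (n - 1).

(* Probability that round t+1 is reached (t = 0 is the first round). *)
Definition reach_prob (n : nat) (p : R) (t : nat) : R := (1 - end_prob n p) ^ t.

Definition round_fee (n : nat) (p c : R) : R := INR n * p * c.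

Definition fee_term (u : R -> R) (n : nat) (v s c : R) (t : nat) : R :=
  let p := bid_prob u n v s c in reach_prob n p t * round_fee n p c.

(* Sum of a series (a chosen limit if it converges; arbitrary otherwise). *)
Definition series_sum (f : nat -> R) : R :=
  epsilon (inhabits 0) (fun l => infinite_sum f l).

Definition expected_fees (u : R -> R) (n : nat) (v s c : R) : R :=
  series_sum (fee_term u n v s c).

Definition revenue (u : R -> R) (n : nat) (v s c : R) : R :=
  s + expected_fees u n v s c.

(* Main.v *)
Require Import Defs.
From Stdlib Require Import Reals Lra Lia Psatz ClassicalEpsilon.
From Coquelicot Require Coquelicot.
Open Scope R_scope.

Lemma E_bound (q : R) (m : nat) : 0 <= q <= 1 ->
  INR (S m) * (1 - q) * q ^ m <= 1 - q ^ (S m).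
Proof.
  intros Hq. induction m as [|m IH].
  - simpl. lra.
  - rewrite (S_INR (S m)). set (k := INR (S m)) in *.
    change (q ^ S (S m)) with (q * q ^ S m).
    change (q ^ S m) with (q * q ^ m) in *.
    assert (0 <= q ^ m) by (apply pow_le; lra).
    assert (q ^ m <= 1) by (clear IH; induction m; simpl; nra).
    assert (q * (k * (1 - q) * q ^ m) <= q * (1 - q * q ^ m)) by (apply Rmult_le_compat_l; lra).
    assert (q * q ^ m * (1 - q) <= 1 - q) by (assert (q * q^m <= 1) by nra; nra).
    nra.
Qed.

Lemma series_ok (u : R -> R) (n : nat) (v s c : R) :
  (2 <= n)%nat -> 0 < c -> 0 < u c -> u c < u (v - s) ->
  infinite_sum (fee_term u n v s c) (c * u (v - s) / u c) /\
  expected_fees u n v s c = c * u (v - s) / u c.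
Proof.
  intros Hn Hc H1 H2.
  set (r := u c / u (v - s)).
  assert (Hr0 : 0 < r) by (unfold r; apply Rdiv_lt_0_compat; lra).
  assert (Hr1 : r < 1) by (unfold r; apply (Rmult_lt_reg_r (u (v - s))); [lra|];
    field_simplify; lra).
  set (q := Rpower r (/ INR (n - 1))).
  assert (Hn1 : 0 < INR (n - 1)) by (apply lt_0_INR; lia).
  assert (Hq0 : 0 < q) by (unfold q, Rpower; apply exp_pos).
  assert (Hq1 : q < 1).
  { unfold q, Rpower. rewrite <- exp_0. apply exp_increasing.
    assert (ln r < 0) by (rewrite <- ln_1; apply ln_increasing; lra).
    assert (0 < / INR (n - 1)) by (apply Rinv_0_lt_compat; lra). nra. }
  assert (Hqn : q ^ (n - 1) = r).
  { rewrite <- Rpower_pow by lra. unfold q. rewrite Rpower_mult.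
    rewrite Rinv_l by lra. apply Rpower_1; lra. }
  assert (Hp : bid_prob u n v s c = 1 - q) by reflexivity.
  assert (HE : end_prob n (1 - q) = INR n * (1 - q) * r).
  { unfold end_prob. replace (1 - (1 - q)) with q by ring. now rewrite Hqn. }
  assert (HnR : 0 < INR n) by (apply lt_0_INR; lia).
  assert (HEpos : 0 < end_prob n (1 - q)) by (rewrite HE; apply Rmult_lt_0_compat; [nra|lra]).
  assert (HElt : end_prob n (1 - q) < 1).
  { unfold end_prob. replace (1 - (1 - q)) with q by ring.
    destruct n as [|n']; [lia|]. replace (S n' - 1)%nat with n' by lia.
    pose proof (E_bound q n'). assert (0 < q ^ S n') by (apply pow_lt; lra).
    assert (INR (S n') * (1 - q) * q ^ n' <= 1 - q ^ S n') by (apply H; lra). lra. }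
  set (x := 1 - end_prob n (1 - q)).
  set (K := INR n * (1 - q) * c).
  assert (Hs : infinite_sum (fee_term u n v s c) (c * u (v - s) / u c)).
  { assert (Hx : Rabs x < 1) by (unfold x; apply Rabs_def1; lra).
    pose proof (GP_infinite x Hx) as G. unfold Pser in G.
    change (Un_cv (sum_f_R0 (fun n0 => 1 * x ^ n0)) (/ (1 - x))) in G.
    assert (Hk : Un_cv (fun _ : nat => K) K).
    { intros e He. exists 0%nat. intros. unfold R_dist. rewrite Rminus_diag, Rabs_R0. lra. }
    pose proof (CV_mult _ _ _ _ G Hk) as G2.
    change (Un_cv (sum_f_R0 (fee_term u n v s c)) (c * u (v - s) / u c)).
    replace (c * u (v - s) / u c) with (/ (1 - x) * K).
    2:{ unfold x, K. replace (1 - (1 - end_prob n (1 - q))) with (end_prob n (1 - q)) by ring.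
        rewrite HE. unfold r. field. repeat split; lra. }
    intros e He. destruct (G2 e He) as [N HN]. exists N. intros m Hm.
    specialize (HN m Hm). rewrite (Rmult_comm (sum_f_R0 _ m)), scal_sum in HN.
    replace (sum_f_R0 (fee_term u n v s c) m) with (sum_f_R0 (fun i => 1 * x ^ i * K) m); auto.
    apply sum_eq. intros i _. unfold fee_term, reach_prob, round_fee. rewrite Hp.
    fold x. unfold K. ring. }
  split; auto. unfold expected_fees, series_sum.
  apply (uniqueness_sum (fee_term u n v s c)); auto.
  apply epsilon_spec. eauto.
Qed.

Lemma exp_conv (x z y : R) : x < z < y ->
  (y - x) * exp z < (y - z) * exp x + (z - x) * exp y.
Proof.
  intros [H1 H2].
  assert (Ex : exp x = exp z * exp (x - z)) by (rewrite <- exp_plus; f_equal; ring).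
  assert (Ey : exp y = exp z * exp (y - z)) by (rewrite <- exp_plus; f_equal; ring).
  pose proof (exp_ineq1 (x - z) ltac:(lra)). pose proof (exp_ineq1 (y - z) ltac:(lra)).
  pose proof (exp_pos z).
  rewrite Ex, Ey.
  assert ((y - z) * (exp z * (1 + (x - z))) < (y - z) * (exp z * exp (x - z))) by
    (apply Rmult_lt_compat_l; [lra| apply Rmult_lt_compat_l; lra]).
  assert ((z - x) * (exp z * (1 + (y - z))) < (z - x) * (exp z * exp (y - z))) by
    (apply Rmult_lt_compat_l; [lra| apply Rmult_lt_compat_l; lra]).
  nra.
Qed.

Lemma g_incr (y1 y2 : R) : 0 < y1 < y2 -> (exp y1 - 1) * y2 < (exp y2 - 1) * y1.
Proof. intros H. pose proof (exp_conv 0 y1 y2 ltac:(lra)). rewrite exp_0 in H0. nra. Qed.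

Lemma f_dec (y1 y2 : R) : 0 < y1 < y2 -> y1 * (1 - exp (- y2)) < y2 * (1 - exp (- y1)).
Proof. intros H. pose proof (exp_conv (- y2) (- y1) 0 ltac:(lra)). rewrite exp_0 in H0. nra. Qed.

Lemma key1 (y : R) : 0 < y -> exp y - 1 < y * exp y.
Proof.
  intros H. pose proof (exp_ineq1 (- y) ltac:(lra)).
  assert (E : exp y * exp (- y) = 1) by (rewrite <- exp_plus; replace (y + - y) with 0 by ring; apply exp_0).
  pose proof (exp_pos y). nra.
Qed.

Lemma key2 (y : R) : 0 < y -> y < exp y - 1.
Proof. intros H. pose proof (exp_ineq1 y ltac:(lra)). lra. Qed.

Lemma exp_gt1 (y : R) : 0 < y -> 1 < exp y.
Proof. intros; pose proof (key2 y H); lra. Qed.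

Lemma lt_div (A B D1 D2 : R) : 0 < D1 -> 0 < D2 -> A * D2 < B * D1 -> A / D1 < B / D2.
Proof.
  intros H1 H2 H. apply (Rmult_lt_reg_r (D1 * D2)); [nra|].
  replace (A / D1 * (D1 * D2)) with (A * D2) by (field; lra).
  replace (B / D2 * (D1 * D2)) with (B * D1) by (field; lra). lra.
Qed.

Lemma cara_alt (rho x : R) : rho < 0 -> cara rho x = (exp ((- rho) * x) - 1) / (- rho).
Proof. intros H. unfold cara. replace (- rho * x) with ((- rho) * x) by ring. field. lra. Qed.

Lemma ratio_alt (rho c X : R) : rho < 0 -> 0 < c ->
  c * cara rho X / cara rho c = c * (exp ((- rho) * X) - 1) / (exp ((- rho) * c) - 1).
Proof.
  intros H Hc. rewrite !cara_alt by lra.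
  assert (1 < exp (- rho * c)) by (apply exp_gt1; nra).
  field. lra.
Qed.

Lemma IV_a (a c X : R) : 0 < a -> 0 < c < X -> X < c * (exp (a * X) - 1) / (exp (a * c) - 1).
Proof.
  intros Ha Hc. pose proof (g_incr (a * c) (a * X) ltac:(split; nra)).
  assert (1 < exp (a * c)) by (apply exp_gt1; nra).
  replace X with (X / 1) at 1 by field. apply lt_div; [lra|lra|].
  apply (Rmult_lt_reg_l a); nra.
Qed.

Lemma V_v (a c X1 X2 : R) : 0 < a -> 0 < c -> X1 < X2 ->
  c * (exp (a * X1) - 1) / (exp (a * c) - 1) < c * (exp (a * X2) - 1) / (exp (a * c) - 1).
Proof.
  intros Ha Hc H. assert (1 < exp (a * c)) by (apply exp_gt1; nra).
  apply lt_div; try lra. assert (exp (a*X1) < exp (a*X2)) by (apply exp_increasing; nra).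
  apply Rmult_lt_compat_r; [lra|]. apply Rmult_lt_compat_l; lra.
Qed.

Lemma V_s (a c x d : R) : 0 < a -> 0 < c < x -> 0 < d ->
  c * (exp (a * x) - 1) / (exp (a * c) - 1) + d < c * (exp (a * (x + d)) - 1) / (exp (a * c) - 1).
Proof.
  intros Ha Hc Hd. assert (1 < exp (a * c)) by (apply exp_gt1; nra).
  assert (E : exp (a * (x + d)) = exp (a * x) * exp (a * d)) by (rewrite <- exp_plus; f_equal; ring).
  pose proof (key2 (a * d) ltac:(nra)). pose proof (key1 (a * c) ltac:(nra)).
  assert (exp (a * c) < exp (a * x)) by (apply exp_increasing; nra).
  assert (Hm : d * (exp (a * c) - 1) < c * (exp (a * x) * (exp (a * d) - 1))).
  { apply (Rmult_lt_reg_l a); auto.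
    assert (a * c * exp (a * x) * (exp (a * d) - 1) > a * c * exp (a * x) * (a * d)).
    { apply Rmult_lt_compat_l; [|lra]. pose proof (exp_pos (a*x)). nra. }
    assert (a * c * exp (a * x) * (a * d) > a * c * exp (a * c) * (a * d)).
    { apply Rmult_lt_compat_r; [nra|]. apply Rmult_lt_compat_l; nra. }
    assert (a * d * (exp (a * c) - 1) < a * d * (a * c * exp (a * c))) by (apply Rmult_lt_compat_l; nra).
    nra. }
  rewrite E.
  replace (c * (exp (a * x) * exp (a * d) - 1) / (exp (a * c) - 1)) with
    (c * (exp (a * x) - 1) / (exp (a * c) - 1) + c * (exp (a * x) * (exp (a * d) - 1)) / (exp (a * c) - 1))
    by (field; lra).
  apply Rplus_lt_compat_l. replace d with (d * (exp (a * c) - 1) / (exp (a * c) - 1)) at 1 by (field; lra).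
  apply lt_div; nra.
Qed.

Lemma V_c (a c1 c2 X : R) : 0 < a -> 0 < c1 < c2 -> c2 < X ->
  c2 * (exp (a * X) - 1) / (exp (a * c2) - 1) < c1 * (exp (a * X) - 1) / (exp (a * c1) - 1).
Proof.
  intros Ha Hc HX. assert (1 < exp (a * c1)) by (apply exp_gt1; nra).
  assert (1 < exp (a * c2)) by (apply exp_gt1; nra).
  assert (1 < exp (a * X)) by (apply exp_gt1; nra).
  pose proof (g_incr (a * c1) (a * c2) ltac:(split; nra)).
  apply lt_div; try lra.
  assert (c2 * (exp (a * c1) - 1) < c1 * (exp (a * c2) - 1)) by (apply (Rmult_lt_reg_l a); nra).
  nra.
Qed.
Module RhoM.
Import Coquelicot.Coquelicot.
Open Scope R_scope.

Lemma rho_mono (a1 a2 c X : R) : 0 < a2 < a1 -> 0 < c < X ->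
  (exp (a2 * X) - 1) / (exp (a2 * c) - 1) < (exp (a1 * X) - 1) / (exp (a1 * c) - 1).
Proof.
  intros Ha Hc.
  set (F := fun a => (exp (a * X) - 1) / (exp (a * c) - 1)).
  set (df := fun a => (X * exp (a * X) * (exp (a * c) - 1) - c * exp (a * c) * (exp (a * X) - 1))
                       / (exp (a * c) - 1) ^ 2).
  assert (Hd : forall a, 0 < a -> is_derive F a (df a)).
  { intros a Hpos. assert (1 < exp (a * c)) by (apply exp_gt1; nra).
    unfold F, df. auto_derive.
    - lra.
    - field. lra. }
  assert (Hpos : forall a, 0 < a -> 0 < df a).
  { intros a Hp. unfold df. apply Rdiv_lt_0_compat.
    2:{ assert (1 < exp (a * c)) by (apply exp_gt1; nra). apply pow_lt. lra. }
    pose proof (f_dec (a * c) (a * X) ltac:(split; nra)) as Hf.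
    assert (E1 : exp (a * c) * exp (- (a * c)) = 1) by (rewrite <- exp_plus; replace (a * c + - (a * c)) with 0 by ring; apply exp_0).
    assert (E2 : exp (a * X) * exp (- (a * X)) = 1) by (rewrite <- exp_plus; replace (a * X + - (a * X)) with 0 by ring; apply exp_0).
    set (P := exp (a * c) * exp (a * X)).
    assert (0 < P) by (unfold P; pose proof (exp_pos (a*c)); pose proof (exp_pos (a*X)); nra).
    assert (Hm : P * (a * c * (1 - exp (- (a * X)))) < P * (a * X * (1 - exp (- (a * c)))))
      by (apply Rmult_lt_compat_l; auto).
    assert (Hm2 : a * (c * exp (a * c) * (exp (a * X) - 1)) < a * (X * exp (a * X) * (exp (a * c) - 1))).
    { replace (a * (c * exp (a * c) * (exp (a * X) - 1))) with (P * (a * c * (1 - exp (- (a * X))))).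
      2:{ unfold P. replace (exp (a * c) * exp (a * X) * (a * c * (1 - exp (- (a * X))))) with
            (a * c * exp (a * c) * (exp (a * X) - exp (a * X) * exp (- (a * X)))) by ring.
          rewrite E2. ring. }
      replace (a * (X * exp (a * X) * (exp (a * c) - 1))) with (P * (a * X * (1 - exp (- (a * c))))).
      2:{ unfold P. replace (exp (a * c) * exp (a * X) * (a * X * (1 - exp (- (a * c))))) with
            (a * X * exp (a * X) * (exp (a * c) - exp (a * c) * exp (- (a * c)))) by ring.
          rewrite E1. ring. }
      auto. }
    apply Rmult_lt_reg_l in Hm2; lra. }
  destruct (MVT_gen F a2 a1 df) as [xi [Hxi Heq]].
  - intros x Hx. rewrite Rmin_left in Hx by lra. rewrite Rmax_right in Hx by lra.
    apply Hd. lra.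
  - intros x Hx. rewrite Rmin_left in Hx by lra. rewrite Rmax_right in Hx by lra.
    assert (Hx' : 0 < x) by lra. pose proof (proj1 (is_derive_Reals F x (df x)) (Hd x Hx')) as HD.
    exact (derivable_continuous_pt F x (exist _ (df x) HD)).
  - rewrite Rmin_left in Hxi by lra. rewrite Rmax_right in Hxi by lra.
    assert (0 < df xi) by (apply Hpos; lra).
    change (F a2 < F a1). nra.
Qed.

End RhoM.
Import RhoM.

Lemma upper_VI (a v s c : R) : 0 < a -> 0 <= s -> 0 < c < v - s ->
  c * (exp (a * (v - s)) - 1) / (exp (a * c) - 1) + s <= (exp (a * v) - 1) / a.
Proof.
  intros Ha Hs Hc.
  assert (1 < exp (a * c)) by (apply exp_gt1; nra).
  assert (1 < exp (a * (v - s))) by (apply exp_gt1; nra).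
  pose proof (key2 (a * c) ltac:(nra)).
  assert (Hh1 : c * (exp (a * (v - s)) - 1) / (exp (a * c) - 1) < (exp (a * (v - s)) - 1) / a).
  { apply lt_div; try lra. 
    assert (a * c < exp (a * c) - 1) by lra.
    assert (0 < exp (a * (v - s)) - 1) by lra. nra. }
  assert (E : exp (a * v) = exp (a * (v - s)) * exp (a * s)) by (rewrite <- exp_plus; f_equal; ring).
  pose proof (exp_ineq1_le (a * s)).
  assert (Hh2 : (exp (a * (v - s)) - 1) / a + s <= (exp (a * v) - 1) / a).
  { apply (Rmult_le_reg_l a); auto.
    replace (a * ((exp (a * (v - s)) - 1) / a + s)) with (exp (a * (v - s)) - 1 + a * s) by (field; lra).
    replace (a * ((exp (a * v) - 1) / a)) with (exp (a * v) - 1) by (field; lra).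
    rewrite E. assert (0 <= a * s) by nra. nra. }
  lra.
Qed.

Lemma lub_VI (a v b : R) : 0 < a -> 0 < v -> b < (exp (a * v) - 1) / a ->
  exists c, 0 < c < v /\ b < c * (exp (a * v) - 1) / (exp (a * c) - 1).
Proof.
  intros Ha Hv Hb.
  set (U := (exp (a * v) - 1) / a).
  assert (HU : 0 < U) by (unfold U; pose proof (exp_gt1 (a * v) ltac:(nra)); apply Rdiv_lt_0_compat; lra).
  fold U in Hb.
  set (c := Rmin (v / 2) ((U - b) / (2 * a * U))).
  assert (Hc1 : c <= v / 2) by apply Rmin_l.
  assert (Hc2 : c <= (U - b) / (2 * a * U)) by apply Rmin_r.
  assert (Hc0 : 0 < c).
  { unfold c. apply Rmin_glb_lt; [lra|]. apply Rdiv_lt_0_compat; [lra|]. nra. }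
  exists c. split; [lra|].
  assert (Hac : a * c * U <= (U - b) / 2).
  { apply (Rmult_le_compat_l (2 * a * U)) in Hc2; [|nra].
    replace (2 * a * U * ((U - b) / (2 * a * U))) with (U - b) in Hc2 by (field; lra). nra. }
  assert (1 < exp (a * c)) by (apply exp_gt1; nra).
  pose proof (key1 (a * c) ltac:(nra)).
  replace (c * (exp (a * v) - 1) / (exp (a * c) - 1)) with (U * (a * c) / (exp (a * c) - 1))
    by (unfold U; field; lra).
  assert (Hk : (1 - a * c) * (exp (a * c) - 1) < a * c) by nra.
  assert (U * (1 - a * c) < U * (a * c) / (exp (a * c) - 1)).
  { replace (U * (1 - a * c)) with (U * (1 - a * c) * (exp (a * c) - 1) / (exp (a * c) - 1)) by (field; lra).
    apply lt_div; try lra. 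
    assert (U * ((1 - a * c) * (exp (a * c) - 1)) < U * (a * c)) by (apply Rmult_lt_compat_l; auto). nra. }
  nra.
Qed.

Lemma cara_pos_mono (rho c X : R) : rho < 0 -> 0 < c < X -> 0 < cara rho c /\ cara rho c < cara rho X.
Proof.
  intros H Hc. rewrite !cara_alt by lra.
  assert (1 < exp (- rho * c)) by (apply exp_gt1; nra).
  assert (exp (- rho * c) < exp (- rho * X)) by (apply exp_increasing; nra).
  split; [apply Rdiv_lt_0_compat; lra|].
  apply lt_div; try lra. nra.
Qed.

Lemma rev_II (rho : R) (n : nat) (v s c : R) : rho < 0 -> (2 <= n)%nat -> 0 < c -> c < v - s ->
  infinite_sum (fee_term (cara rho) n v s c) (c * cara rho (v - s) / cara rho c)
  /\ revenue (cara rho) n v s c = c * cara rho (v - s) / cara rho c + s.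
Proof.
  intros H Hn Hc Hcv. destruct (cara_pos_mono rho c (v - s) H ltac:(lra)).
  destruct (series_ok (cara rho) n v s c Hn Hc H0 H1) as [S1 S2].
  split; auto. unfold revenue. rewrite S2. ring.
Qed.

Lemma rev_exp (rho : R) (n : nat) (v s c : R) : rho < 0 -> (2 <= n)%nat -> 0 < c -> c < v - s ->
  revenue (cara rho) n v s c = c * (exp ((- rho) * (v - s)) - 1) / (exp ((- rho) * c) - 1) + s.
Proof.
  intros. rewrite (proj2 (rev_II rho n v s c H H0 H1 H2)). rewrite ratio_alt by lra. reflexivity.
Qed.

Theorem theorem3 :
  (* (I) risk neutral *)
  (forall (n : nat) (v s c : R), (2 <= n)%nat -> 0 < v -> 0 <= s -> 0 < c -> c < v - s ->
     revenue u_neutral n v s c = v)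
  /\
  (forall rho : R, rho < 0 ->
     (* (II) closed form (and convergence of the expected-fee series) *)
     (forall (n : nat) (v s c : R), (2 <= n)%nat -> 0 < v -> 0 <= s -> 0 < c -> c < v - s ->
        infinite_sum (fee_term (cara rho) n v s c) (c * cara rho (v - s) / cara rho c)
        /\ revenue (cara rho) n v s c = c * cara rho (v - s) / cara rho c + s)
     /\
     (* (III) independence of n *)
     (forall (n m : nat) (v s c : R), (2 <= n)%nat -> (2 <= m)%nat ->
        0 < v -> 0 <= s -> 0 < c -> c < v - s ->
        revenue (cara rho) n v s c = revenue (cara rho) m v s c)
     /\
     (* (IV) exceeds v *)
     (forall (n : nat) (v s c : R), (2 <= n)%nat -> 0 < v -> 0 <= s -> 0 < c -> c < v - s ->
        v < revenue (cara rho) n v s c)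
     /\
     (* (V) strictly increasing in v *)
     (forall (n : nat) (v1 v2 s c : R), (2 <= n)%nat -> 0 < v1 -> v1 < v2 ->
        0 <= s -> 0 < c -> c < v1 - s ->
        revenue (cara rho) n v1 s c < revenue (cara rho) n v2 s c)
     /\
     (* (V) decreasing in s *)
     (forall (n : nat) (v s1 s2 c : R), (2 <= n)%nat -> 0 < v ->
        0 <= s1 -> s1 < s2 -> 0 < c -> c < v - s2 ->
        revenue (cara rho) n v s2 c < revenue (cara rho) n v s1 c)
     /\
     (* (V) decreasing in c *)
     (forall (n : nat) (v s c1 c2 : R), (2 <= n)%nat -> 0 < v ->
        0 <= s -> 0 < c1 -> c1 < c2 -> c2 < v - s ->
        revenue (cara rho) n v s c2 < revenue (cara rho) n v s c1)
     /\
     (* (VI) supremum over s >= 0 and 0 < c < v - s equals u(v) *)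
     (forall (n : nat) (v : R), (2 <= n)%nat -> 0 < v ->
        is_lub (fun r => exists s c, 0 <= s /\ 0 < c /\ c < v - s /\
                                     r = revenue (cara rho) n v s c)
               (cara rho v)))
  /\
  (* (V) decreasing in rho (more risk-loving => larger revenue) *)
  (forall (rho1 rho2 : R) (n : nat) (v s c : R), rho1 < rho2 -> rho2 < 0 ->
     (2 <= n)%nat -> 0 < v -> 0 <= s -> 0 < c -> c < v - s ->
     revenue (cara rho2) n v s c < revenue (cara rho1) n v s c).
Proof.
  split; [|split].
  - intros n v s c Hn Hv Hs Hc Hcv.
    destruct (series_ok u_neutral n v s c Hn Hc) as [_ He]; [unfold u_neutral; lra|unfold u_neutral; lra|].
    unfold revenue. rewrite He. unfold u_neutral. field. lra.
  - intros rho Hrho. assert (Ha : 0 < - rho) by lra.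
    split; [|split; [|split; [|split; [|split; [|split]]]]].
    + intros. apply rev_II; auto.
    + intros. rewrite !rev_exp by auto. reflexivity.
    + intros. rewrite rev_exp by auto. pose proof (IV_a (- rho) c (v - s) Ha ltac:(lra)). lra.
    + intros. rewrite !rev_exp by (auto; lra). pose proof (V_v (- rho) c (v1 - s) (v2 - s) Ha H3 ltac:(lra)). lra.
    + intros. rewrite !rev_exp by (auto; lra).
      pose proof (V_s (- rho) c (v - s2) (s2 - s1) Ha ltac:(lra) ltac:(lra)).
      replace (v - s2 + (s2 - s1)) with (v - s1) in H5 by ring. lra.
    + intros. rewrite !rev_exp by (auto; lra).
      pose proof (V_c (- rho) c1 c2 (v - s) Ha ltac:(lra) ltac:(lra)). lra.
    + intros n v Hn Hv. rewrite cara_alt by lra. split.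
      * intros r [s [c [Hs [Hc [Hcv Hr]]]]]. subst r. rewrite rev_exp by auto.
        apply upper_VI; auto.
      * intros b Hb. destruct (Rle_or_lt ((exp (- rho * v) - 1) / - rho) b) as [Hle|Hlt]; auto.
        exfalso. destruct (lub_VI (- rho) v b Ha Hv Hlt) as [c [Hc Hbc]].
        assert (Hin : revenue (cara rho) n v 0 c <= b).
        { apply Hb. exists 0, c. repeat split; try lra. }
        rewrite rev_exp in Hin by (auto; lra).
        rewrite Rminus_0_r, Rplus_0_r in Hin. lra.
  - intros rho1 rho2 n v s c H12 H2 Hn Hv Hs Hc Hcv.
    rewrite !rev_exp by (auto; lra).
    pose proof (rho_mono (- rho1) (- rho2) c (v - s) ltac:(lra) ltac:(lra)).
    unfold Rdiv in *. rewrite !Rmult_assoc. apply Rplus_lt_compat_r. apply Rmult_lt_compat_l; lra.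
Qed.
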